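(* Let $n>1$ and $m$ be integers with $0<m<n$. Then $$\left|\mathcal{F}(n,m)\right|=|\mathcal{F}_{n-m}^m|+|\mathcal{F}^{n-m}_m|-1,$$ and $$\left|\mathcal{F}(n,m)\right|-2=\sum_{d\geq1}\overline{\mu}(d)\cdot\left\lfloor\tfrac md\right\rfloor\cdot\left\lfloor\tfrac{n-m}{d}\right\rfloor .$$ In particular, for every positive integer $t$, $$\sum_{d\geq1}\overline{\mu}(d)\cdot\left\lfloor\tfrac td\right\rfloor^2=\left|\mathcal{F}(2t,t)\right|-2=2\left|\mathcal{F}_t\right|-3 .$$
   Context: For an integer $N\geq 1$, the Farey sequence $\mathcal{F}_N$ is the ascending sequence of irreducible fractions $\tfrac hk$ (with $h\ge0$, $k\ge1$, $\gcd(h,k)=1$) such that $\tfrac01\leq\tfrac hk\leq\tfrac11$ and $1\leq k\leq N$. For integers $N\ge1$ and $M$, $\mathcal{F}_N^M:=\left(\tfrac hk\in\mathcal{F}_N:\ h\leq M\right)$. For $0<m<n$, $\mathcal{F}(n,m):=\left(\tfrac hk\in\mathcal{F}_n:\ h\leq m,\ k-h\leq n-m\right)$ (the Farey subsequence associated with an element of rank $m$ in the Boolean lattice of rank $n$). $\overline{\mu}$ denotes the number-theoretic Möbius function, and $|\cdot|$ denotes the number of terms of a sequence. *)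

(* Defs.v *)
From mathcomp Require Import all_boot all_order all_algebra.
Set Implicit Arguments. Unset Strict Implicit. Unset Printing Implicit Defensive.
Import GRing.Theory Num.Theory.

(* A fraction h/k of [0,1] is represented by the pair (h, k) of naturals. *)

Definition farey (N : nat) : seq (nat * nat) :=
  [seq p <- [seq (h, k) | k <- iota 1 N, h <- iota 0 k.+1] | coprime p.1 p.2].

Definition fareyM (N M : nat) : seq (nat * nat) :=
  [seq p <- farey N | p.1 <= M].

Definition fareyB (n m : nat) : seq (nat * nat) :=
  [seq p <- farey n | (p.1 <= m) && (p.2 - p.1 <= n - m)].

(* Number-theoretic Moebius function (mu 0 := 0 by convention; unused). *)
Definition moebius (d : nat) : int :=
  (if d == 0 then 0
  else if all (fun p => logn p d == 1) (primes d)
       then (-1) ^+ size (primes d) else 0)%R.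

(* Main.v *)
Require Import Defs.
From mathcomp Require Import all_boot all_order all_algebra.
From mathcomp Require Import zify.
Import GRing.Theory Num.Theory.
Set Implicit Arguments. Unset Strict Implicit. Unset Printing Implicit Defensive.

Lemma mu_p2 p d : prime p -> (0 < d)%N -> (p ^ 2 %| d)%N -> moebius d = 0%R.
Proof.
move=> pp d0 pd; rewrite /moebius.
have -> : (d == 0) = false by lia.
case: ifP => // /allP /(_ p).
rewrite mem_primes pp d0 /=.
have pdv : (p %| d)%N by apply: dvdn_trans pd; by rewrite (expnS p 1) dvdn_mulr.
move=> /(_ pdv) /eqP.
move: pd; rewrite pfactor_dvdn // => ? ?; lia.
Qed.

Lemma mu_pM p s : prime p -> (0 < s)%N -> ~~ (p %| s)%N ->
  moebius (p * s) = (- moebius s)%R.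
Proof.
move=> pp s0 nps; have p0 := prime_gt0 pp.
have Hperm : perm_eq (primes (p * s)) (p :: primes s).
  apply: uniq_perm; first exact: primes_uniq.
    rewrite /= primes_uniq andbT mem_primes negb_and; apply/orP; right.
    by rewrite negb_and nps orbT.
  move=> q; rewrite primesM // in_cons primes_prime // mem_seq1.
  by [].
rewrite /moebius.
have -> : (p * s == 0) = false by lia.
have -> : (s == 0) = false by lia.
rewrite (perm_all _ Hperm) (perm_size Hperm) /=.
rewrite lognM // logn_prime // eqxx (logn_coprime (_ : coprime p s)); last by rewrite prime_coprime.
rewrite /=.
have -> : all (fun q => logn q (p * s) == 1) (primes s) =
          all (fun q => logn q s == 1) (primes s).
  apply: eq_in_all => q; rewrite mem_primes => /and3P [qp _ qs].
  rewrite lognM // logn_prime //.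
  have -> : (q == p) = false; last by [].
  apply/negbTE/eqP => E; subst q; by rewrite qs in nps.
case: ifP => _; last by rewrite oppr0.
by rewrite exprS mulN1r.
Qed.

Lemma mu1 : moebius 1 = 1%R.
Proof. by []. Qed.

Lemma mu_sum g : (0 < g)%N -> (\sum_(d <- divisors g) moebius d)%R = ((g == 1)%:R : int).
Proof.
move=> g0; have [g1|g1] := eqVneq g 1.
  by subst g; rewrite big_cons big_nil /= addr0.
have gt1 : (1 < g)%N by lia.
set p := pdiv g; have pp : prime p := pdiv_prime gt1.
have p1 := prime_gt1 pp; have p0 := prime_gt0 pp.
have [r cpr gE] := pfactor_coprime pp g0.
set e := logn p g in gE.
have e0 : (0 < e)%N by rewrite /e logn_gt0 mem_primes pp g0 pdiv_dvd.
have r0 : (0 < r)%N by move: g0; rewrite gE; case: r {cpr gE} => //; rewrite mul0n.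
have nprd : forall s, (s %| r)%N -> ~~ (p %| s)%N.
  move=> s sr; apply/negP => ps; move: cpr; rewrite prime_coprime // => /negP; apply.
  exact: dvdn_trans sr.
rewrite (bigID (fun d => p ^ 2 %| d)%N) /= big1_seq ?add0r; last first.
  move=> d /andP [pd]; rewrite -dvdn_divisors // => dg.
  apply: (mu_p2 pp) => //; exact: dvdn_gt0 dg.
rewrite -big_filter.
have Hp : perm_eq [seq d <- divisors g | ~~ (p ^ 2 %| d)%N]
                 (divisors r ++ map (muln p) (divisors r)).
  apply: uniq_perm.
  - by rewrite filter_uniq // divisors_uniq.
  - rewrite cat_uniq divisors_uniq map_inj_uniq ?divisors_uniq; last first.
      by move=> x y /eqP; rewrite eqn_pmul2l // => /eqP.
    rewrite andbT /=; apply/hasPn => x /mapP [s]; rewrite -dvdn_divisors // => sr ->.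
    rewrite -dvdn_divisors //; apply/negP => psr.
    by move: (nprd _ psr); rewrite dvdn_mulr.
  - move=> d; rewrite mem_filter mem_cat -!dvdn_divisors //.
    apply/andP/orP.
    + move=> [np2 dg]; have [pd|npd] := boolP (p %| d)%N.
        right; apply/mapP; exists (d %/ p); last by rewrite mulnC divnK.
        have d0 : (0 < d)%N by exact: dvdn_gt0 dg.
        rewrite -dvdn_divisors //.
        have nps : ~~ (p %| d %/ p)%N.
          apply/negP => ps; move/negP: np2; apply.
          by rewrite -(divnK pd) (expnS p 1) expn1 mulnC dvdn_pmul2l.
        have : (d %/ p %| r * p ^ e.-1)%N.
          rewrite -(dvdn_pmul2l p0) (mulnC p (d %/ p)) divnK // mulnCA -expnS prednK //.
          by rewrite -gE.
        by rewrite Gauss_dvdl // coprimeXr // coprime_sym prime_coprime.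
      left; move: dg; rewrite gE Gauss_dvdl // coprimeXr // coprime_sym prime_coprime //.
    + case=> [dr|/mapP [s]].
        split; last by rewrite gE dvdn_mulr.
        apply/negP => p2d; move: (nprd _ dr); rewrite (dvdn_trans _ p2d) //.
        by rewrite (expnS p 1) dvdn_mulr.
      rewrite -dvdn_divisors // => sr ->; split.
        rewrite expnS expn1 dvdn_pmul2l //; exact: nprd.
      rewrite gE -(prednK e0) expnS mulnCA dvdn_pmul2l //; exact: dvdn_mulr.
rewrite (perm_big _ Hp) big_cat big_map /=.
rewrite [X in (_ + X)%R](eq_big_seq (fun s => - moebius s)%R); last first.
  move=> s; rewrite -dvdn_divisors // => sr; apply: mu_pM => //.
    exact: dvdn_gt0 sr.
  exact: nprd.
by rewrite sumrN addrN.
Qed.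

Local Open Scope ring_scope.

Lemma sum_dvd a d : (0 < d)%N ->
  \sum_(1 <= h < a.+1) ((d %| h)%N : nat)%:Z = (a %/ d)%N%:Z.
Proof.
move=> d0; elim: a => [|a IH]; first by rewrite big_nil div0n.
rewrite big_nat_recr //= IH divnS // PoszD addrC.
by [].
Qed.

Lemma cop_mu N h j : (0 < h)%N -> (h <= N)%N ->
  ((coprime h j : nat))%:Z =
  \sum_(1 <= d < N.+1) moebius d * ((d %| h)%N : nat)%:Z * ((d %| j)%N : nat)%:Z.
Proof.
move=> h0 hN; have g0 : (0 < gcdn h j)%N by rewrite gcdn_gt0 h0.
rewrite /coprime.
have -> : ((gcdn h j == 1 : bool) : nat)%:Z = ((gcdn h j == 1)%:R : int).
  by case: (_ == _).
rewrite -mu_sum //.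
have Hp : perm_eq (divisors (gcdn h j)) [seq d <- index_iota 1 N.+1 | (d %| gcdn h j)%N].
  apply: uniq_perm; first exact: divisors_uniq.
    by rewrite filter_uniq // iota_uniq.
  move=> d; rewrite mem_filter -dvdn_divisors // mem_index_iota.
  case dg: (d %| gcdn h j)%N => //=.
  have := dvdn_leq g0 dg; have := dvdn_gt0 g0 dg.
  have : (gcdn h j <= h)%N by apply: dvdn_leq => //; exact: dvdn_gcdl.
  lia.
rewrite (perm_big _ Hp) big_filter big_mkcond /=.
apply: eq_bigr => d _; rewrite dvdn_gcd.
by case: (d %| h)%N; case: (d %| j)%N; rewrite ?mulr1 ?mulr0.
Qed.

Lemma mob_count a b N : (a <= N)%N -> (b <= N)%N ->
  \sum_(1 <= h < a.+1) \sum_(1 <= j < b.+1) ((coprime h j : nat))%:Z =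
  \sum_(1 <= d < N.+1) moebius d * (a %/ d)%N%:Z * (b %/ d)%N%:Z.
Proof.
move=> aN bN.
rewrite big_nat_cond.
rewrite (eq_bigr (fun h => \sum_(1 <= j < b.+1) \sum_(1 <= d < N.+1)
   moebius d * ((d %| h)%N : nat)%:Z * ((d %| j)%N : nat)%:Z)); last first.
  move=> h /andP [/andP [h1 ha] _]; apply: eq_bigr => j _; apply: cop_mu; lia.
rewrite -big_nat_cond.
rewrite (eq_bigr (fun h => \sum_(1 <= d < N.+1) \sum_(1 <= j < b.+1)
   moebius d * ((d %| h)%N : nat)%:Z * ((d %| j)%N : nat)%:Z)); last first.
  by move=> h _; rewrite exchange_big.
rewrite exchange_big /=; apply: eq_big_nat => d /andP [d1 _].
rewrite -!sum_dvd; try lia.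
rewrite [moebius d * _]mulr_sumr mulr_suml; apply: eq_bigr => h _.
by rewrite mulr_sumr.
Qed.

Local Close Scope ring_scope.

Definition Rab a b := [seq p <- [seq (h,j) | h <- iota 0 a.+1, j <- iota 0 b.+1] | coprime p.1 p.2].
Definition Rpos a b := [seq p <- [seq (h,j) | h <- iota 1 a, j <- iota 1 b] | coprime p.1 p.2].

Lemma mem_farey N p : (p \in farey N) = [&& 0 < p.2, p.2 <= N, p.1 <= p.2 & coprime p.1 p.2].
Proof.
case: p => h k; rewrite mem_filter.
apply/andP/idP.
  move=> [c H]; have [k' [h' [ik ih [E1 E2]]]] := allpairsPdep H; subst.
  move: ik ih c; rewrite !mem_iota /= => ik ih c; rewrite c andbT; lia.
move=> /and4P [k0 kN hk c]; split => //.
apply/allpairsPdep; exists k, h; rewrite !mem_iota; split => //; simpl in *; lia.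
Qed.

Lemma uniq_farey N : uniq (farey N).
Proof.
rewrite filter_uniq //; apply: allpairs_uniq_dep.
- exact: iota_uniq.
- by move=> x _; exact: iota_uniq.
- move=> [x1 y1] [x2 y2] _ _ /= [-> ->] //.
Qed.

Lemma mem_fareyM N M p : (p \in fareyM N M) = [&& 0 < p.2, p.2 <= N, p.1 <= p.2, coprime p.1 p.2 & p.1 <= M].
Proof. by rewrite mem_filter mem_farey andbC !andbA. Qed.

Lemma uniq_fareyM N M : uniq (fareyM N M).
Proof. by rewrite filter_uniq // uniq_farey. Qed.

Lemma mem_fareyB n m p : (p \in fareyB n m) = [&& 0 < p.2, p.2 <= n, p.1 <= p.2, coprime p.1 p.2, p.1 <= m & p.2 - p.1 <= n - m].
Proof. by rewrite mem_filter mem_farey andbC !andbA. Qed.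

Lemma uniq_fareyB n m : uniq (fareyB n m).
Proof. by rewrite filter_uniq // uniq_farey. Qed.

Lemma mem_Rab a b p : (p \in Rab a b) = [&& p.1 <= a, p.2 <= b & coprime p.1 p.2].
Proof.
case: p => h j; rewrite mem_filter; apply/andP/idP.
  move=> [c H]; have [[x y] [ix iy E]] := allpairsP H; case: E => ? ?; subst.
  move: ix iy c; rewrite !mem_iota /= => ix iy c; rewrite c andbT; lia.
move=> /and3P [ha jb c]; split => //; apply/allpairsP; exists (h, j).
rewrite !mem_iota; split => //; simpl in *; lia.
Qed.

Lemma uniq_Rab a b : uniq (Rab a b).
Proof.
rewrite filter_uniq //; apply: allpairs_uniq; try exact: iota_uniq.
by move=> [x1 y1] [x2 y2] _ _ /= [-> ->].
Qed.

Lemma mem_Rpos a b p : (p \in Rpos a b) = [&& 0 < p.1, p.1 <= a, 0 < p.2, p.2 <= b & coprime p.1 p.2].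
Proof.
case: p => h j; rewrite mem_filter; apply/andP/idP.
  move=> [c H]; have [[x y] [ix iy E]] := allpairsP H; case: E => ? ?; subst.
  move: ix iy c; rewrite !mem_iota /= => ix iy c; rewrite c andbT; lia.
move=> /and5P [h0 ha j0 jb c]; split => //; apply/allpairsP; exists (h, j).
rewrite !mem_iota; split => //; simpl in *; lia.
Qed.

Lemma uniq_Rpos a b : uniq (Rpos a b).
Proof.
rewrite filter_uniq //; apply: allpairs_uniq; try exact: iota_uniq.
by move=> [x1 y1] [x2 y2] _ _ /= [-> ->].
Qed.

Lemma coprime_sub h k : h <= k -> coprime h (k - h) = coprime h k.
Proof. by move=> hk; rewrite /coprime -{2}(subnKC hk) gcdnDl. Qed.

Lemma sizeFB a b : size (fareyB (a + b) a) = size (Rab a b).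
Proof.
rewrite -(size_map (fun p => (p.1, p.2 - p.1))).
apply: perm_size; apply: uniq_perm; last 1 first.
- move=> [h j]; rewrite mem_Rab /=; apply/mapP/idP.
    move=> [[h' k']]; rewrite mem_fareyB /= => /and5P [k0 kn hk c /andP [ha kb]] [-> ->].
    rewrite coprime_sub // c andbT; lia.
  move=> /and3P [ha jb c]; exists (h, h + j) => /=; last by rewrite addKn.
  have hj : 0 < h + j by move: c {ha jb}; case: h => [|h']; case: j.
  rewrite mem_fareyB /= -(coprime_sub (leq_addr j h)) addKn c /=; lia.
- rewrite map_inj_in_uniq ?uniq_fareyB //.
  move=> [h k] [h' k']; rewrite !mem_fareyB /= => /and3P [_ _ /andP [hk _]] /and3P [_ _ /andP [hk' _]] [e1 e2].
  subst h'; congr (_, _); lia.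
- exact: uniq_Rab.
Qed.

Lemma cop00 h j : coprime h j -> 0 < h + j.
Proof. by case: h => [|h']; case: j. Qed.

Lemma copnn k : coprime k k = (k == 1).
Proof. by rewrite /coprime gcdnn. Qed.

Lemma sizeR_split a b : 0 < a -> 0 < b ->
  size (Rab a b) + 1 = size (fareyM b a) + size (fareyM a b).
Proof.
move=> a0 b0.
rewrite -(count_predC (fun p : nat * nat => p.1 <= p.2) (Rab a b)).
rewrite -(count_predC (fun p : nat * nat => p.1 < p.2) (fareyM a b)).
rewrite -!size_filter.
have A : perm_eq [seq p <- Rab a b | p.1 <= p.2] (fareyM b a).
  apply: uniq_perm; [exact: filter_uniq (uniq_Rab _ _)|exact: uniq_fareyM|].
  move=> [h j]; rewrite mem_filter mem_Rab mem_fareyM /=.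
  case c: (coprime h j); rewrite ?andbF //= !andbT.
  have := cop00 c; lia.
have B : perm_eq [seq (p.2, p.1) | p <- [seq p <- Rab a b | predC (fun p : nat * nat => p.1 <= p.2) p]]
   [seq p <- fareyM a b | p.1 < p.2].
  apply: uniq_perm.
  - rewrite map_inj_in_uniq; first exact: filter_uniq (uniq_Rab _ _).
    by move=> [x y] [x' y'] _ _ /= [-> ->].
  - exact: filter_uniq (uniq_fareyM _ _).
  move=> [x y]; apply/mapP/idP.
    move=> [[y' x']]; rewrite mem_filter mem_Rab /= => /and4P [yx ya xb c] [-> ->].
    rewrite mem_filter mem_fareyM /= coprime_sym c /=; lia.
  rewrite mem_filter mem_fareyM /= => /andP [xy /and5P [y0 ya xy' c xb]].
  exists (y, x) => //; rewrite mem_filter mem_Rab /= coprime_sym c andbT; lia.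
have C : perm_eq [seq p <- fareyM a b | predC (fun p : nat * nat => p.1 < p.2) p] [:: (1, 1)].
  apply: uniq_perm; [exact: filter_uniq (uniq_fareyM _ _)|by []|].
  move=> [h k]; rewrite mem_filter mem_fareyM mem_seq1 /=.
  apply/idP/idP.
    move=> /andP [hk /and5P [k0 ka hk' c hb]].
    have E : h = k by lia.
    subst h; move: c; rewrite copnn => /eqP ->; by [].
  move=> /eqP [-> ->]; rewrite /=; lia.
rewrite (perm_size A) (perm_size C) -(perm_size B) size_map /=.
by rewrite -addnA.
Qed.

Lemma sizeR_pos a b : 0 < a -> 0 < b -> size (Rab a b) = (size (Rpos a b)).+2.
Proof.
move=> a0 b0.
rewrite -(count_predC (fun p : nat * nat => (0 < p.1) && (0 < p.2)) (Rab a b)) -!size_filter.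
have A : perm_eq [seq p <- Rab a b | (0 < p.1) && (0 < p.2)] (Rpos a b).
  apply: uniq_perm; [exact: filter_uniq (uniq_Rab _ _)|exact: uniq_Rpos|].
  move=> [h j]; rewrite mem_filter mem_Rab mem_Rpos /=.
  case c: (coprime h j); rewrite ?andbF //= !andbT; lia.
have C : perm_eq [seq p <- Rab a b | predC (fun p : nat * nat => (0 < p.1) && (0 < p.2)) p] [:: (0, 1); (1, 0)].
  apply: uniq_perm; [exact: filter_uniq (uniq_Rab _ _)|by []|].
  move=> [h j]; rewrite mem_filter mem_Rab !inE /=.
  apply/idP/idP.
    case: h => [|h]; case: j => [|j] //=; rewrite ?andbF ?orbF //.
      by rewrite /coprime gcd0n => /andP [_ /eqP [->]].
    by rewrite /coprime gcdn0 => /andP [_ /eqP [->]].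
  by case/orP => /eqP [-> ->] /=; rewrite /coprime ?gcd0n ?gcdn0 /=; lia.
rewrite (perm_size A) (perm_size C) /=; lia.
Qed.

Local Open Scope ring_scope.
Lemma size_Rpos a b : (size (Rpos a b))%:Z =
  (\sum_(1 <= h < a.+1) \sum_(1 <= j < b.+1) ((coprime h j : nat))%:Z)%R.
Proof.
rewrite size_filter count_flatten -map_comp sumnE big_map.
rewrite (big_morph Posz PoszD (erefl _)).
rewrite /index_iota subSS subn0; apply: eq_bigr => h _ /=.
rewrite count_map -sumn_count sumnE big_map (big_morph Posz PoszD (erefl _)).
by rewrite subSS subn0.
Qed.

Local Open Scope ring_scope.

Lemma part1 (n m : nat) : (1 < n)%N -> (0 < m)%N -> (m < n)%N ->
     (size (fareyB n m))%:Z =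
       (size (fareyM (n - m) m))%:Z + (size (fareyM m (n - m)))%:Z - 1
   /\ (size (fareyB n m))%:Z - 2 =
       \sum_(1 <= d < n.+1) moebius d * (m %/ d)%:Z * ((n - m) %/ d)%:Z.
Proof.
move=> n1 m0 mn.
have b0 : (0 < n - m)%N by lia.
have -> : fareyB n m = fareyB (m + (n - m)) m by rewrite subnKC // ltnW.
rewrite sizeFB; split.
  have := congr1 Posz (sizeR_split m0 b0); rewrite !PoszD => <-.
  by rewrite addrK.
rewrite (sizeR_pos m0 b0) -addn2 PoszD addrK size_Rpos.
apply: mob_count; lia.
Qed.

Lemma fareyMtt t : fareyM t t = farey t.
Proof.
apply/all_filterP/allP => p; rewrite mem_farey => /and4P [_ H1 H2 _].
exact: leq_trans H2 H1.
Qed.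

Theorem mainTheorem4 :
  (forall n m : nat, (1 < n)%N -> (0 < m)%N -> (m < n)%N ->
     (size (fareyB n m))%:Z =
       (size (fareyM (n - m) m))%:Z + (size (fareyM m (n - m)))%:Z - 1
   /\ (size (fareyB n m))%:Z - 2 =
       \sum_(1 <= d < n.+1) moebius d * (m %/ d)%:Z * ((n - m) %/ d)%:Z)
  /\
  (forall t : nat, (0 < t)%N ->
     \sum_(1 <= d < t.+1) moebius d * ((t %/ d)%:Z) ^+ 2
       = (size (fareyB (2 * t) t))%:Z - 2
   /\ (size (fareyB (2 * t) t))%:Z - 2 = 2 * (size (farey t))%:Z - 3).
Proof.
split; first exact: part1.
move=> t t0.
have [H1 H2] := @part1 (2 * t) t ltac:(lia) t0 ltac:(lia).
move: H1 H2; rewrite (_ : (2 * t - t = t)%N); last by lia.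
rewrite fareyMtt => H1 H2; split.
  rewrite H2.
  rewrite [RHS](@big_cat_nat _ _ _ t.+1) //=; last by lia.
  rewrite [X in _ = _ + X]big_nat_cond [X in _ = _ + X]big1 ?addr0; last first.
    move=> d /andP [/andP [td _] _].
    rewrite (divn_small td); exact: (mulr0 (moebius d * 0)).
  by apply: eq_bigr => d _; rewrite expr2 mulrA.
rewrite H1; lia.
Qed.
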